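(* Let $\rho\ge 0$ and let $t=(\sqrt{1+8\rho}-1)/(2\rho)$ if $\rho>0$ and $t=2$ if $\rho=0$. Consider the two-dimensional Poisson regression model with interaction at $\boldsymbol{\beta}=(0,-1,-1,-\rho)^\top$ on $\mathcal{X}=[0,\infty)^2$, and let $\xi_t$ be the design assigning equal weights $1/4$ to $(0,0)$, $(2,0)$, $(0,2)$ and $(t,t)$. Then $d((x,x);\xi_t)\le 0$ for all $x\ge 0$.
   Context: In the model, an observation at setting $\mathbf{x}=(x_1,x_2)$ is Poisson distributed with mean $\lambda(\mathbf{x})=\exp(\mathbf{f}(\mathbf{x})^\top\boldsymbol{\beta})=\exp(-x_1-x_2-\rho x_1x_2)$, where $\mathbf{f}(\mathbf{x})=(1,x_1,x_2,x_1x_2)^\top$. For a design $\xi$ with settings $\mathbf{x}_i$ and weights $w_i$ (nonnegative, summing to $1$), the information matrix is $\mathbf{M}(\xi)=\sum_i w_i\lambda(\mathbf{x}_i)\mathbf{f}(\mathbf{x}_i)\mathbf{f}(\mathbf{x}_i)^\top$, and the deduced sensitivity function is $d(\mathbf{x};\xi)=\mathbf{f}(\mathbf{x})^\top\mathbf{M}(\xi)^{-1}\mathbf{f}(\mathbf{x})/p-1/\lambda(\mathbf{x})$ with $p=4$. *)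

(* Defs.v *)
From HB Require Import structures.
From mathcomp Require Import all_boot all_order all_algebra.
From mathcomp Require Import all_classical all_reals all_analysis.
Set Implicit Arguments. Unset Strict Implicit. Unset Printing Implicit Defensive.
Import Order.TTheory GRing.Theory Num.Theory.
Local Open Scope ring_scope.

Section PoissonModel.
Variable R : realType.

(* mean lambda(x) = exp(f(x)^T beta), beta = (0,-1,-1,-rho) *)
Definition lam (rho : R) (x : R * R) : R :=
  expR (- x.1 - x.2 - rho * x.1 * x.2).

Definition fvec (x : R * R) : 'cV[R]_4 :=
  \col_(i < 4) [:: 1; x.1; x.2; x.1 * x.2]`_i.

(* a design is a list of (support point, weight) pairs *)
Definition infoM (rho : R) (xi : seq ((R * R) * R)) : 'M[R]_4 :=
  \sum_(p <- xi) (p.2 * lam rho p.1) *: (fvec p.1 *m (fvec p.1)^T).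

(* deduced sensitivity function, p = 4 *)
Definition sens (rho : R) (xi : seq ((R * R) * R)) (x : R * R) : R :=
  ((fvec x)^T *m invmx (infoM rho xi) *m fvec x) 0 0 / 4%:R - (lam rho x)^-1.

Definition tval (rho : R) : R :=
  if rho == 0 then 2 else (Num.sqrt (1 + 8%:R * rho) - 1) / (2 * rho).

Definition xi_t (rho : R) : seq ((R * R) * R) :=
  let t := tval rho in
  [:: ((0, 0), 1 / 4%:R); ((2, 0), 1 / 4%:R); ((0, 2), 1 / 4%:R); ((t, t), 1 / 4%:R)].

End PoissonModel.

(* Main.v *)
Require Import Defs.
From HB Require Import structures.
From mathcomp Require Import all_boot all_order all_algebra.
From mathcomp Require Import all_classical all_reals all_analysis.
From mathcomp Require Import ring lra.
Import Order.TTheory GRing.Theory Num.Theory.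
Local Open Scope ring_scope.

Section L.
Variable R : realType.

Lemma expR_ge_sum (x : R) n : 0 <= x ->
  \sum_(i < n) x ^+ i / (i`!)%:R <= expR x.
Proof.
move=> x0; rewrite /expR.
have := @nondecreasing_cvgn_le _ (series (exp_coeff x)).
move=> /(_ _ (is_cvg_series_exp_coeff x) n).
rewrite /series /= big_mkord; apply.
by apply: nondecreasing_series => k _ _; apply: exp_coeff_ge0.
Qed.

Lemma expR_T2 (x : R) : 0 <= x -> 1 + x + x ^+ 2 / 2 <= expR x.
Proof.
move=> x0; have := @expR_ge_sum x 3 x0.
rewrite !big_ord_recr big_ord0 /= !factS fact0 /=.
apply: le_trans; rewrite le_eqVlt; apply/orP; left; apply/eqP.
by rewrite !expr0 !expr1; field.
Qed.

Lemma expR_T4 (x : R) : 0 <= x ->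
  1 + x + x ^+ 2 / 2 + x ^+ 3 / 6 + x ^+ 4 / 24 <= expR x.
Proof.
move=> x0; have := @expR_ge_sum x 5 x0.
rewrite !big_ord_recr big_ord0 /= !factS fact0 /=.
apply: le_trans; rewrite le_eqVlt; apply/orP; left; apply/eqP.
by rewrite !expr0 !expr1; field.
Qed.

Lemma e2_ge5 : 5 <= expR (2 : R).
Proof. have := @expR_T2 2 (ler0n _ 2); apply: le_trans; lra. Qed.

Lemma expR_pow (x : R) n : expR (n%:R * x) = expR x ^+ n.
Proof. exact: expRM_natl. Qed.

Lemma expR_ge_pow (y : R) n : 0 <= 1 + y -> (1 + y) ^+ n <= expR (n%:R * y).
Proof.
move=> hy; rewrite expRM_natl; apply: lerXn2r.
- by rewrite nnegrE.
- by rewrite nnegrE expR_ge0.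
- exact: expR_ge1Dx.
Qed.

Lemma e2_le10 : expR (2 : R) <= 10.
Proof.
have h : (3/4) ^+ 8 <= expR (-2 : R).
  have := @expR_ge_pow (-1/4) 8; rewrite (_ : 8%:R * (-1/4) = -2 :> R); last by field.
  rewrite (_ : 1 + -1/4 = 3/4 :> R); last by field.
  by apply; lra.
have h2 : expR (2 : R) * expR (-2) = 1 by rewrite expRxMexpNx_1.
have h3 : 1/10 <= expR (-2 : R) by lra.
have e0 := expR_gt0 (2 : R).
nra.
Qed.

Lemma t2_le_expR (t : R) : 0 <= t -> t <= 2 -> t ^+ 2 <= expR t.
Proof. move=> h0 h2; have := @expR_T2 t h0; apply: le_trans; nra. Qed.


Lemma polyA (k t u : R) : 0 <= k -> k <= 5 -> 0 <= t -> t <= 2 -> 0 <= u -> u <= 1 ->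
  (1 + u - t*u) ^+ 2 + k * t ^+ 2 * u ^+ 2 <=
  (1 + u) ^+ 2 * (1 + t * (u * (2 - u)) + (t * (u * (2 - u))) ^+ 2 / 2).
Proof.
move=> k0 k5 t0 t2 u0 u1.
pose al := (1+u)^+2*(2-u) + 2*(1+u).
pose be := (1+u)^+2*u*(2-u)^+2/2 - u*(1+k).
have hal : 0 <= al.
  by rewrite /al; apply: addr_ge0; [apply: mulr_ge0; [exact: sqr_ge0|lra] | lra].
have h4 : 0 <= 4 + u + 5*u^+2 + u^+3 - u^+4.
  have := exprn_ile1 4 u0 u1; have := exprn_ge0 2 u0; have := exprn_ge0 3 u0; lra.
have hab : 0 <= al + 2 * be.
  have -> : al + 2 * be = (1-u)*(4 + u + 5*u^+2 + u^+3 - u^+4) + 2*u*(5 - k).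
    by rewrite /al /be; field.
  by apply: addr_ge0; [apply: mulr_ge0 => //; lra | apply: mulr_ge0; nra].
have hb : 0 <= al + t * be.
  have h1 : 0 <= (1 - t/2) * al by apply: mulr_ge0 => //; lra.
  have h2 : 0 <= (t/2) * (al + 2*be) by apply: mulr_ge0 => //; lra.
  have -> : al + t * be = (1 - t/2) * al + (t/2) * (al + 2*be) by field.
  lra.
have hc : 0 <= t * u * (al + t * be) by apply: mulr_ge0 => //; apply: mulr_ge0.
rewrite -subr_ge0.
have -> : (1 + u) ^+ 2 * (1 + t * (u * (2 - u)) + (t * (u * (2 - u))) ^+ 2 / 2) -
  ((1 + u - t*u) ^+ 2 + k * t ^+ 2 * u ^+ 2) = t * u * (al + t * be).
  by rewrite /al /be; field.
exact: hc.
Qed.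

Lemma polyB (u A B : R) : 0 <= u -> u <= 1 -> 0 <= A -> 0 <= B ->
  A * (1 + u^+2)^+2 <= 1 -> B * ((1+u)/2)^+8 <= 1 ->
  (1 - u^+2)^+2 * A + u^+4 * B <= 1.
Proof.
move=> u0 u1 A0 B0 hA hB.
set Q := (1 + u^+2)^+2. set P := ((1+u)/2)^+8.
have Q0 : 0 < Q by rewrite /Q exprn_gt0 //; nra.
have P0 : 0 < P by rewrite /P exprn_gt0 //; lra.
have hA' : A <= Q^-1 by rewrite -(ler_pM2r Q0) mulVf ?gt_eqF.
have hB' : B <= P^-1 by rewrite -(ler_pM2r P0) mulVf ?gt_eqF.
have h1 : (1 - u^+2)^+2 * A <= (1 - u^+2)^+2 * Q^-1 by apply: ler_wpM2l => //; exact: sqr_ge0.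
have h2 : u^+4 * B <= u^+4 * P^-1 by apply: ler_wpM2l => //; exact: exprn_ge0.
suff : (1 - u^+2)^+2 * Q^-1 + u^+4 * P^-1 <= 1 by move=> h; lra.
have hm : 0 <= u * (1 + u^+2) <= 2 * ((1+u)/2)^+4.
  apply/andP; split; first by apply: mulr_ge0 => //; nra.
  rewrite -subr_ge0.
  have -> : 2 * ((1+u)/2)^+4 - u * (1 + u^+2) = (1-u)^+4/8 by field.
  by apply: divr_ge0 => //; apply: exprn_ge0; lra.
have hsq : (u * (1 + u^+2))^+2 <= (2 * ((1+u)/2)^+4)^+2.
  case/andP: hm => m0 m1; apply: lerXn2r => //; rewrite nnegrE //; lra.
have key : u^+4 * Q <= 4 * u^+2 * P.
  have -> : u^+4 * Q = u^+2 * (u * (1 + u^+2))^+2 by rewrite /Q; ring.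
  have -> : 4 * u^+2 * P = u^+2 * (2 * ((1+u)/2)^+4)^+2 by rewrite /P; field.
  by apply: ler_wpM2l => //; exact: exprn_ge0.
have -> : (1 - u^+2)^+2 * Q^-1 + u^+4 * P^-1 = ((1 - u^+2)^+2 * P + u^+4 * Q) / (Q * P).
  by field; rewrite ?gt_eqF.
rewrite ler_pdivrMr ?mulr_gt0 // ?mul1r.
have hQP : Q * P = (1 - u^+2)^+2 * P + 4 * u^+2 * P by rewrite /Q; ring.
lra.
all: nra.
Qed.

Lemma polyC (s : R) : 0 <= s ->
  (s*(2+s))^+2/5 + ((1+s)*s)^+2/2 + (1+s)^+4 <=
  1 + 4*s + (4*s)^+2/2 + (4*s)^+3/6 + (4*s)^+4/24.
Proof.
move=> s0; rewrite -subr_ge0.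
have -> : 1 + 4*s + (4*s)^+2/2 + (4*s)^+3/6 + (4*s)^+4/24 -
  ((s*(2+s))^+2/5 + ((1+s)*s)^+2/2 + (1+s)^+4) =
  s^+2 * (7/10 + 73/15 * s + 269/30 * s^+2) by field.
apply: mulr_ge0; first exact: sqr_ge0.
have := sqr_ge0 s; nra.
Qed.

Lemma key (t u : R) : 0 < t -> t <= 2 -> 0 <= u ->
  (1 - t*u*(1-u) - u^+2)^+2 + 2 * (t*u*(1-u)/2)^+2 * expR 2 + (u^+2)^+2 * expR (t+2)
  <= expR (2*t*u + (2-t)*u^+2).
Proof.
move=> t0 t2 u0.
have e5 := e2_ge5; have e10 := e2_le10.
set X := expR (2*t*u + (2-t)*u^+2).
have X0 : 0 < X by exact: expR_gt0.
case: (lerP u 1) => hu.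
- set w := u*(2-u).
  have w0 : 0 <= t * w by apply: mulr_ge0; [lra|apply: mulr_ge0; lra].
  have hA : (1 - t*u*(1-u) - u^+2)^+2 + 2 * (t*u*(1-u)/2)^+2 * expR 2
            <= (1-u^+2)^+2 * expR (t*w).
    have -> : (1 - t*u*(1-u) - u^+2)^+2 + 2 * (t*u*(1-u)/2)^+2 * expR 2 =
      (1-u)^+2 * ((1+u-t*u)^+2 + (expR 2/2) * t^+2 * u^+2) by field.
    have -> : (1-u^+2)^+2 * expR (t*w) = (1-u)^+2 * ((1+u)^+2 * expR (t*w)) by ring.
    apply: ler_wpM2l; first exact: sqr_ge0.
    apply: le_trans (@polyA (expR 2/2) t u _ _ _ _ _ _) _; try lra.
    apply: ler_wpM2l; first exact: sqr_ge0.
    exact: expR_T2.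
  have hE1 : expR (t*w) = X * expR (- (2*u^+2)).
    by rewrite /X -expRD /w; congr expR; ring.
  have hE2 : expR (t+2) <= X * expR (4*(1-u)).
    rewrite /X -expRD ler_expR -subr_ge0.
    have -> : 2 * t * u + (2 - t) * u ^+ 2 + 4 * (1 - u) - (t + 2) = (1-u)^+2 * (2-t) by ring.
    by apply: mulr_ge0; [exact: sqr_ge0|lra].
  set A := expR (- (2*u^+2)). set B := expR (4*(1-u)).
  have A0 : 0 <= A by exact: expR_ge0.
  have B0 : 0 <= B by exact: expR_ge0.
  have hA1 : A * (1 + u^+2)^+2 <= 1.
    have h := @expR_ge_pow (u^+2) 2 (addr_ge0 ler01 (sqr_ge0 u)).
    have hh : A * expR (2%:R * u^+2) = 1 by rewrite /A mulrC expRxMexpNx_1.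
    apply: le_trans (_ : _ <= A * expR (2%:R * u^+2)) _; last by rewrite hh.
    by apply: ler_wpM2l.
  have hB1 : B * ((1+u)/2)^+8 <= 1.
    have h := @expR_ge_pow (-(1-u)/2) 8.
    rewrite (_ : 1 + -(1-u)/2 = (1+u)/2) in h; last by field.
    have h' := h ltac:(lra).
    have hh : B * expR (8%:R * (-(1-u)/2)) = 1.
      rewrite /B (_ : 8%:R * (-(1-u)/2) = - (4*(1-u))); last by field.
      exact: expRxMexpNx_1.
    apply: le_trans (_ : _ <= B * expR (8%:R * (-(1-u)/2))) _; last by rewrite hh.
    by apply: ler_wpM2l.
  have hP := @polyB u A B u0 hu A0 B0 hA1 hB1.
  have h4 : (u^+2)^+2 * expR (t+2) <= u^+4 * (X * B).
    rewrite -exprM; apply: ler_wpM2l => //; exact: exprn_ge0.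
  rewrite hE1 -/A in hA.
  have : (1 - u^+2)^+2 * (X * A) + u^+4 * (X * B) = X * ((1 - u^+2)^+2 * A + u^+4 * B) by ring.
  have := ler_wpM2l (ltW X0) hP; rewrite mulr1.
  move=> h5 h6; lra.
- set s := u - 1.
  have s0 : 0 <= s by rewrite /s; lra.
  set K := expR (t+2).
  have hK : K = expR t * expR 2 by rewrite /K expRD.
  have et1 : 1 <= expR t by rewrite -expR0 ler_expR; lra.
  have K5 : 5 <= K by rewrite hK; nra.
  have hX : X = K * expR (4*s + (2-t)*s^+2).
    by rewrite /X /K -expRD /s; congr expR; ring.
  have hT : 1 + 4*s + (4*s)^+2/2 + (4*s)^+3/6 + (4*s)^+4/24 <= expR (4*s + (2-t)*s^+2).
    apply: le_trans (@expR_T4 (4*s) _) _; first by lra.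
    rewrite ler_expR lerDl; apply: mulr_ge0; [lra|exact: sqr_ge0].
  have hl1 : (1 - t*u*(1-u) - u^+2)^+2 <= K/5 * (s*(2+s))^+2.
    have -> : (1 - t*u*(1-u) - u^+2)^+2 = s^+2 * (1 + u - t*u)^+2 by rewrite /s; ring.
    have h1 : (1 + u - t*u)^+2 <= (1+u)^+2.
      rewrite -subr_ge0.
      have -> : (1+u)^+2 - (1 + u - t*u)^+2 = t*u*(2 + 2*u - t*u) by ring.
      apply: mulr_ge0; [apply: mulr_ge0; lra|nra].
    have -> : K/5 * (s*(2+s))^+2 = (K/5) * (s^+2 * (1+u)^+2) by rewrite /s; field.
    have h2 : s^+2 * (1 + u - t*u)^+2 <= s^+2 * (1+u)^+2.
      by apply: ler_wpM2l => //; exact: sqr_ge0.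
    have h3 : 0 <= s^+2 * (1+u)^+2 by apply: mulr_ge0; exact: sqr_ge0.
    have h5 : 1 <= K/5 by rewrite ler_pdivlMr //; lra.
    nra.
  have hl2 : 2 * (t*u*(1-u)/2)^+2 * expR 2 <= K * ((1+s)*s)^+2/2.
    have -> : 2 * (t*u*(1-u)/2)^+2 * expR 2 = (t^+2 * expR 2) * (((1+s)*s)^+2/2).
      by rewrite /s; field.
    have -> : K * ((1+s)*s)^+2/2 = K * (((1+s)*s)^+2/2) by field.
    apply: ler_wpM2r; first by apply: divr_ge0 => //; exact: sqr_ge0.
    rewrite hK; apply: ler_wpM2r; first exact: expR_ge0.
    by apply: t2_le_expR; lra.
  have hl3 : (u^+2)^+2 * K = K * (1+s)^+4.
    by rewrite /K /s; ring.
  have hp := @polyC s s0.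
  have hK0 : 0 <= K by lra.
  have hKp := ler_wpM2l hK0 hp.
  have hKT := ler_wpM2l hK0 hT.
  rewrite hX.
  have : K * ((s*(2+s))^+2/5 + ((1+s)*s)^+2/2 + (1+s)^+4) =
    K/5 * (s*(2+s))^+2 + K * ((1+s)*s)^+2/2 + K * (1+s)^+4 by field.
  lra.
Qed.


Definition pts (t : R) : seq (R * R) := [:: (0, 0); (2, 0); (0, 2); (t, t)].

Definition Fm (t : R) : 'M[R]_4 := \matrix_(k, j) (fvec (nth (0,0) (pts t) k)) j ord0.

Definition Gm (t : R) : 'M[R]_4 := \matrix_(i, j)
  nth 0 (nth [::] [:: [:: 1; 0; 0; 0]; [:: -1/2; 1/2; 0; 0]; [:: -1/2; 0; 1/2; 0];
                     [:: (t-1)/t^+2; -1/(2*t); -1/(2*t); 1/t^+2]] i) j.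

Lemma FG (t : R) : t != 0 -> Fm t *m Gm t = 1%:M.
Proof.
move=> t0; apply/matrixP => i j; rewrite !mxE.
rewrite !big_ord_recr big_ord0 /= !mxE /=.
case: i => [[|[|[|[|i]]]] Hi] //=; case: j => [[|[|[|[|j]]]] Hj] //=;
  rewrite /=; field; exact: t0.
Qed.

Definition dv (rho t : R) : 'rV[R]_4 := \row_k (1/4 * lam rho (nth (0,0) (pts t) k)).

Lemma infoM_eq (rho : R) :
  infoM rho (xi_t rho) = (Fm (Defs.tval rho))^T *m diag_mx (dv rho (Defs.tval rho)) *m Fm (Defs.tval rho).
Proof.
rewrite /infoM /xi_t !big_cons big_nil /=.
apply/matrixP => i j; rewrite mul_mx_diag !mxE.
rewrite !big_ord_recr !big_ord0 /= !mxE /=.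
ring.
Qed.

Definition Dinv (rho t : R) : 'M[R]_4 := diag_mx (\row_k (dv rho t 0 k)^-1).

Lemma dv_neq0 (rho t : R) k : dv rho t 0 k != 0.
Proof. by rewrite /dv mxE mulf_neq0 // ?gt_eqF ?expR_gt0 //; lra. Qed.

Lemma DDinv (rho t : R) : diag_mx (dv rho t) *m Dinv rho t = 1%:M.
Proof.
apply/matrixP => i j; have h := dv_neq0 rho t i; move: h.
rewrite /Dinv mulmx_diag !mxE => h.
by case: (i == j); rewrite ?mulr1n ?mulr0n // mulfV.
Qed.

Lemma invM_eq (rho : R) : Defs.tval rho != 0 ->
  invmx (infoM rho (xi_t rho)) =
  Gm (Defs.tval rho) *m Dinv rho (Defs.tval rho) *m (Gm (Defs.tval rho))^T.
Proof.
move=> t0; set t := Defs.tval rho.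
have FG1 := @FG t t0.
have GF1 : Gm t *m Fm t = 1%:M by apply: mulmx1C.
set B := Gm t *m Dinv rho t *m (Gm t)^T.
have MB : infoM rho (xi_t rho) *m B = 1%:M.
  rewrite infoM_eq -/t /B.
  rewrite -!mulmxA (mulmxA (Fm t)) FG1 mul1mx (mulmxA (diag_mx _)) DDinv mul1mx.
  by rewrite -trmx_mul GF1 trmx1.
have [uM _] := mulmx1_unit MB.
by rewrite -[RHS]mul1mx -(mulVmx uM) -mulmxA MB mulmx1.
Qed.

Lemma tval_facts (rho : R) : 0 <= rho ->
  0 < Defs.tval rho /\ Defs.tval rho <= 2 /\ rho * Defs.tval rho ^+ 2 = 2 - Defs.tval rho.
Proof.
move=> r0; rewrite /Defs.tval; case: eqP => [->|/eqP rn0].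
  by split; [lra|split; [lra|ring]].
have rp : 0 < rho by rewrite lt_neqAle eq_sym rn0.
set r := Num.sqrt (1 + 8%:R * rho).
have r2 : r ^+ 2 = 1 + 8%:R * rho by rewrite /r sqr_sqrtr //; lra.
have rge : 0 <= r by exact: sqrtr_ge0.
have r1 : 1 < r by nra.
have id : rho * ((r - 1) / (2 * rho)) ^+ 2 = 2 - (r - 1) / (2 * rho).
  apply/eqP; rewrite -subr_eq0; apply/eqP.
  have -> : rho * ((r - 1) / (2 * rho)) ^+ 2 - (2 - (r - 1) / (2 * rho)) =
    (r^+2 - 1 - 8 * rho) / (4 * rho) by field; rewrite gt_eqF.
  by rewrite r2; field; rewrite gt_eqF.
have tp : 0 < (r - 1) / (2 * rho) by apply: divr_gt0; lra.
split => //; split => //.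
have : 0 <= rho * ((r - 1) / (2 * rho)) ^+ 2 by apply: mulr_ge0 => //; exact: sqr_ge0.
lra.
Qed.

Lemma lam_neq0 (rho : R) p : lam rho p != 0.
Proof. by rewrite /lam gt_eqF ?expR_gt0. Qed.

Lemma quad (rho x t : R) : t != 0 ->
  ((fvec (x,x))^T *m (Gm t *m Dinv rho t *m (Gm t)^T) *m fvec (x,x)) 0 0 / 4 =
  (1 - x + (t-1)/t^+2 * x^+2)^+2 / lam rho (0,0) + (x/2 - x^+2/(2*t))^+2 / lam rho (2,0)
  + (x/2 - x^+2/(2*t))^+2 / lam rho (0,2) + (x^+2/t^+2)^+2 / lam rho (t,t).
Proof.
move=> t0.
have l1 := lam_neq0 rho (0,0); have l2 := lam_neq0 rho (2,0).
have l3 := lam_neq0 rho (0,2); have l4 := lam_neq0 rho (t,t).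
rewrite !mulmxA /Dinv mul_mx_diag.
do 6 rewrite ?mxE ?big_ord_recr ?big_ord0 /=.
field.
by rewrite l1 l2 l3 l4 t0.
Qed.

End L.

Theorem lemma4 (R : realType) (rho : R) (hrho : 0 <= rho) (x : R) (hx : 0 <= x) :
  sens rho (xi_t rho) (x, x) <= 0.
Proof.
have [t0 [t2 trho]] := @tval_facts R rho hrho.
rewrite /sens invM_eq ?gt_eqF // quad ?gt_eqF //.
move: t0 t2 trho; set t := Defs.tval rho => t0 t2 trho.
have tn0 : t != 0 by rewrite gt_eqF.
set u := x / t.
have u0 : 0 <= u by rewrite /u divr_ge0 //; lra.
have xe : x = t * u by rewrite /u; field.
rewrite xe.
have L1 : lam rho (0,0) = 1 by rewrite /lam /= -expR0; congr expR; ring.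
have L2 : lam rho (2,0) = expR (- 2) by rewrite /lam /=; congr expR; ring.
have L3 : lam rho (0,2) = expR (- 2) by rewrite /lam /=; congr expR; ring.
have L4 : lam rho (t,t) = expR (- (t + 2)).
  rewrite /lam /=; congr expR.
  have h : rho * t * t = 2 - t by rewrite -trho; ring.
  by rewrite h; ring.
have Lx : lam rho (t * u, t * u) = expR (- (2*t*u + (2-t)*u^+2)).
  rewrite /lam /=; congr expR.
  have h : rho * (t * u) * (t * u) = (2 - t) * u^+2 by rewrite -mulrA -trho; ring.
  by rewrite h; ring.
rewrite L1 L2 L3 L4 Lx !expRN !invrK subr_le0.
have K := @key R t u t0 t2 u0.
apply: le_trans K.
rewrite le_eqVlt; apply/orP; left; apply/eqP.
by field.
Qed.
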